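(* Let $F$ be an infinite field of characteristic $p>2$, let $k$ be a positive integer and $n\in\mathbb{N}$. Then the polynomial $t_{2n}=[z_1,z_2][z_3,z_4]\cdots[z_{2n-1},z_{2n}]$, where all $z_j$ are variables of degree $0$, is not a $\mathbb{Z}$-graded identity of $E^{k^\ast}$.
   Context: $L$ is a vector space over $F$ with basis $e_1,e_2,\dots$, $E$ its unital Grassmann algebra (basis $1$ and $e_{i_1}\cdots e_{i_k}$, $i_1<\cdots<i_k$, with $e_ie_j=-e_je_i$). $E^{k^\ast}$ is $E$ with the $\mathbb{Z}$-grading induced by $\|e_i\|=1$ for $i\le k$, $\|e_i\|=0$ for $i>k$ (basis monomials get the sum of degrees of their factors; $1$ has degree $0$). A graded polynomial is a graded identity of $A$ if it vanishes whenever each variable is replaced by an element of the homogeneous component of $A$ of that variable's degree. $[a,b]=ab-ba$. *)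

(* Defs.v *)
From HB Require Import structures.
From mathcomp Require Import all_boot all_order all_algebra.
From mathcomp Require Import finmap.
Set Implicit Arguments. Unset Strict Implicit. Unset Printing Implicit Defensive.
Import Order.TTheory GRing.Theory Num.Theory.
Local Open Scope fset_scope.
Local Open Scope ring_scope.

(* Generators of L are indexed by nat, 0-based: index i stands for the
   paper's e_(i+1).  A basis monomial e_(i1)...e_(im) (i1<...<im) is the
   finite set {i1,...,im}; the empty set is the unit 1. *)
Definition mono := {fset nat}.

Definition gelt (F : fieldType) := mono -> F.

Definition gelt_in_E (F : fieldType) (a : gelt F) : Prop :=
  exists X : {fset mono}, forall S : mono, S \notin X -> a S = 0.

(* number of pairs (s,t), s in S, t in T with s > t: the sign of
   e_S e_T = (-1)^(inv S T) e_(S u T) for disjoint S, T *)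
Definition inv_count (S T : mono) : nat :=
  (\sum_(s <- S) \sum_(t <- T) (t < s))%N.

Definition gone (F : fieldType) : gelt F := fun U => if U == fset0 then 1 else 0.

Definition gmul (F : fieldType) (a b : gelt F) : gelt F := fun U =>
  \sum_(S <- fpowerset U) (-1) ^+ (inv_count S (U `\` S)) * a S * b (U `\` S).

Definition gcomm (F : fieldType) (a b : gelt F) : gelt F :=
  fun U => gmul a b U - gmul b a U.

(* Z-grading of E^{k*}: ||e_i|| = 1 for the first k generators, 0 otherwise *)
Definition mdeg (k : nat) (S : mono) : nat := (\sum_(i <- S) (i < k))%N.

Definition in_component (F : fieldType) (k : nat) (d : int) (a : gelt F) : Prop :=
  gelt_in_E a /\ forall S : mono, a S != 0 -> (mdeg k S)%:Z = d.

(* t_{2n}(z_1,...,z_{2n}) = [z_1,z_2][z_3,z_4]...[z_{2n-1},z_{2n}],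
   with z_(j+1) represented by z j *)
Definition t2n (F : fieldType) (n : nat) (z : nat -> gelt F) : gelt F :=
  \big[@gmul F/@gone F]_(i < n) gcomm (z (2 * i)%N) (z (2 * i).+1).

Definition t2n_graded_identity (F : fieldType) (k n : nat) : Prop :=
  forall z : nat -> gelt F,
    (forall j, (j < 2 * n)%N -> in_component k 0 (z j)) ->
    forall U : mono, t2n n z U = 0.

(* Main.v *)
Require Import Defs.
From HB Require Import structures.
From mathcomp Require Import all_boot all_order all_algebra.
From mathcomp Require Import finmap.
From mathcomp Require Import zify.
From Stdlib Require Import FunctionalExtensionality.
Import Order.TTheory GRing.Theory Num.Theory.
Local Open Scope fset_scope.
Local Open Scope ring_scope.

Definition mon (F : fieldType) (S : mono) (c : F) : gelt F :=
  fun U => if U == S then c else 0.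
Arguments mon {F}.

Lemma gmul_mon (F : fieldType) (S T : mono) (a b : F) :
  (forall x, x \in S -> x \notin T) ->
  gmul (mon S a) (mon T b) = mon (S `|` T) ((-1) ^+ inv_count S T * a * b).
Proof.
move=> dST; apply: functional_extensionality => U; rewrite /gmul /mon.
case: eqP => [->|neU].
- rewrite (bigD1_seq S) ?fset_uniq //=; last by rewrite fpowersetE fsubsetUl.
  have -> : (S `|` T) `\` S = T.
    apply/fsetP=> x; rewrite !inE; have := dST x.
    by case: (x \in S); case: (x \in T) => //= H; have := H isT.
  rewrite !eqxx big1; first by rewrite addr0.
  by move=> X /negbTE XS; rewrite XS mulr0 mul0r.
- rewrite big_seq big1 // => X; rewrite fpowersetE => XU.
  case: eqP => [XS|]; last by rewrite mulr0 mul0r.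
  case: eqP => [UT|]; last by rewrite mulr0.
  exfalso; apply: neU; rewrite -UT -XS; apply/fsetP => x; rewrite !inE.
  case: (boolP (x \in X)) => /= xX; last by [].
  by rewrite (fsubsetP XU).
Qed.

Lemma inv_count_lt (S T : mono) :
  (forall s t, s \in S -> t \in T -> (s < t)%N) -> inv_count S T = 0%N.
Proof.
move=> H; rewrite /inv_count big_seq big1 // => s sS.
rewrite big_seq big1 // => t tT.
by have := H s t sS tT; case: ltngtP.
Qed.

Lemma inv_count_11 (a b : nat) : inv_count [fset b] [fset a] = (a < b)%N.
Proof. by rewrite /inv_count !big_seq_fset1. Qed.

Lemma gcomm_mon (F : fieldType) (a b : nat) : (a < b)%N ->
  gcomm (mon [fset a] (1 : F)) (mon [fset b] 1) = mon ([fset a] `|` [fset b]) 2.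
Proof.
move=> ab; rewrite /gcomm.
rewrite !gmul_mon; last 2 first.
- by move=> x; rewrite !inE => /eqP ->; apply/eqP => E; move: ab; rewrite E ltnn.
- by move=> x; rewrite !inE => /eqP ->; apply/eqP => E; move: ab; rewrite E ltnn.
apply: functional_extensionality => U; rewrite /mon fsetUC.
rewrite !inv_count_11 ab ltnNge (ltnW ab) /=.
case: eqP => _; last by rewrite subr0.
by rewrite expr0 expr1 !mulr1 opprK.
Qed.

Definition blk (a l : nat) : mono := [fset y in iota a l].

Lemma in_blk (a l x : nat) : (x \in blk a l) = (a <= x < a + l)%N.
Proof. by rewrite /blk inE mem_iota. Qed.

Lemma prod_mon (F : fieldType) (k n m : nat) :
  \big[@gmul F/@gone F]_(i < n)
     gcomm (mon [fset (k + 2 * (m + i))%N] 1) (mon [fset (k + (2 * (m + i)).+1)%N] 1)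
  = mon (blk (k + 2 * m) (2 * n)) (2 ^+ n).
Proof.
elim: n m => [|n IH] m.
- rewrite big_ord0; apply: functional_extensionality => U.
  rewrite /gone /mon; congr (if _ then _ else _); congr (U == _).
  by apply/fsetP => x; rewrite in_blk inE; lia.
- rewrite big_ord_recl.
  have -> : \big[@gmul F/@gone F]_(i < n)
     gcomm (mon [fset (k + 2 * (m + (lift ord0 i : nat)))%N] 1)
       (mon [fset (k + (2 * (m + (lift ord0 i : nat))).+1)%N] 1)
   = \big[@gmul F/@gone F]_(i < n)
     gcomm (mon [fset (k + 2 * (m.+1 + i))%N] 1) (mon [fset (k + (2 * (m.+1 + i)).+1)%N] 1).
    apply: eq_bigr => i _; have -> : (m + bump 0 i = m.+1 + i)%N by rewrite /bump /=; lia.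
    by rewrite addnS.
  rewrite IH /= addn0 gcomm_mon; last by lia.
  rewrite gmul_mon; last first.
    by move=> x; rewrite in_blk !inE; case/orP => /eqP ->; lia.
  rewrite inv_count_lt; last first.
    by move=> s t; rewrite in_blk !inE; case/orP => /eqP ->; lia.
  rewrite expr0 mul1r exprS; congr mon.
  by apply/fsetP => x; rewrite in_fsetU !in_blk !inE; lia.
Qed.

Theorem mainTheorem6 (F : fieldType) (p : nat)
  (F_infinite : forall s : seq F, exists x : F, x \notin s)
  (p_prime : prime p) (charFp : p \in [pchar F]) (p_gt2 : (2 < p)%N)
  (k n : nat) (k_pos : (0 < k)%N) :
  ~ t2n_graded_identity F k n.
Proof.
move=> H.
pose z := fun j : nat => mon [fset (k + j)%N] (1 : F).
have Hz : forall j, (j < 2 * n)%N -> in_component k 0 (z j).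
  move=> j _; split.
  - exists [fset [fset (k + j)%N]] => S; rewrite inE /z /mon.
    by move/negbTE => ->.
  - move=> S; rewrite /z /mon; case: ifP => [/eqP -> _|_]; last by rewrite eqxx.
    by rewrite /mdeg big_seq_fset1 ltnNge leq_addr.
have := H z Hz (blk k (2 * n)).
have -> : t2n n z = mon (blk (k + 2 * 0) (2 * n)) (2 ^+ n).
  rewrite -prod_mon /t2n; apply: eq_bigr => i _.
  by rewrite /z add0n addnS.
rewrite /mon muln0 addn0 eqxx => /eqP; apply/negP.
apply: expf_neq0.
have := dvdn_pcharf charFp 2; rewrite -[2%:R]/(2 : F) => <-.
apply/negP => /(dvdn_leq (isT : (0 < 2)%N)); lia.
Qed.
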